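(* Let $M\ge2$, $a_1,\dots,a_{M-1}\in\mathbb{C}$, let $\epsilon=1/\eta$ be a small complex parameter varying in a punctured neighborhood $V^*$ of $0$, and let $K\subset\mathbb{C}\setminus\{0\}$ be compact. Then the Euler–Cauchy equation $$z^Mv^{(M)}(z,\eta)+\sum_{k=1}^{M-1}a_kz^kv^{(k)}(z,\eta)-\eta^Mv(z,\eta)=0$$ has $M$ linearly independent WKB-solutions of the form $\psi_j=\exp\big[\sum_{k=0}^{\infty}h_{j,k}\epsilon^{k-1}\ln z\big]$, $\epsilon\in V^*$, $j=1,\dots,M$, where $h_{j,0}$ are the $M$ distinct $M$-th roots of $1$ and $h_{j,k}\in\mathbb{C}$, and the series $\sum_k h_{j,k}\epsilon^{k-1}$ converge, so that $\psi_j$ are convergent for all $z\in K$ and $\epsilon$ in a punctured neighborhood of $0$.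
   Context: For this operator ($\rho_M=z^M$) the relevant domain is $\Omega=\mathbb{C}\setminus\{0\}$; $\ln z$ denotes a branch of the logarithm. *)

(* Defs.v *)
From Stdlib Require Import Reals.
From Coquelicot Require Import Coquelicot.
Open Scope C_scope.

Definition cexp (z : C) : C :=
  (exp (Re z) * cos (Im z), exp (Re z) * sin (Im z))%R.

Definition cderiv (f : C -> C) (z l : C) : Prop :=
  @is_derive C_AbsRing C_NormedModule f z l.

Definition log_branch (U : C -> Prop) (L : C -> C) : Prop :=
  forall z, U z -> cexp (L z) = z /\ cderiv L z (/ z).

Definition derivs_on (U : C -> Prop) (n : nat) (f : C -> C) (D : nat -> C -> C) : Prop :=
  (forall z, U z -> D 0%nat z = f z) /\
  (forall k z, (k < n)%nat -> U z -> cderiv (D k) z (D (S k) z)).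

Definition euler_cauchy (M : nat) (a : nat -> C) (eta : C) (D : nat -> C -> C) (z : C) : C :=
  pow_n z M * D M z
  + sum_n_m (fun k => a k * pow_n z k * D k z) 1 (M - 1)
  - pow_n eta M * D 0%nat z.

(* Main.v *)
Require Import Defs.
From Stdlib Require Import Reals Lra Lia.
From Coquelicot Require Import Coquelicot.
Open Scope C_scope.
Ltac toC := match goal with |- ?a = ?b => change (@eq C a b) end.

Lemma Re_sum_n (a : nat -> C) n : Re (sum_n a n) = sum_n (fun k => Re (a k)) n.
Proof.
  induction n.
  - rewrite !sum_O. reflexivity.
  - rewrite !sum_Sn. simpl. rewrite <- IHn. reflexivity.
Qed.
Lemma Im_sum_n (a : nat -> C) n : Im (sum_n a n) = sum_n (fun k => Im (a k)) n.
Proof.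
  induction n.
  - rewrite !sum_O. reflexivity.
  - rewrite !sum_Sn. simpl. rewrite <- IHn. reflexivity.
Qed.

Lemma Cser_split (a : nat -> C) (l : C) :
  is_series a l <->
  is_series (fun n => Re (a n)) (Re l) /\ is_series (fun n => Im (a n)) (Im l).
Proof.
  unfold is_series. split.
  - intros H. pose proof (proj1 (@filterlim_locally _ _ eventually _ (sum_n a) l) H) as H'.
    clear H. rename H' into H.
    split; apply (proj2 (@filterlim_locally _ _ eventually _ _ _)); intros eps; specialize (H eps); revert H; apply filter_imp;
    intros n Hn; destruct Hn as [H1 H2].
    + change (ball (Re l) eps (Re (sum_n a n))) in H1. rewrite Re_sum_n in H1. exact H1.
    + change (ball (Im l) eps (Im (sum_n a n))) in H2. rewrite Im_sum_n in H2. exact H2.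
  - intros [H1 H2]. pose proof (proj1 (@filterlim_locally _ _ eventually _ _ _) H1) as H1'.
    pose proof (proj1 (@filterlim_locally _ _ eventually _ _ _) H2) as H2'. clear H1 H2.
    rename H1' into H1; rename H2' into H2.
    apply (proj2 (@filterlim_locally _ _ eventually _ (sum_n a) l)). intros eps. generalize (filter_and _ _ (H1 eps) (H2 eps)).
    apply filter_imp. intros n [Hr Hi]. split.
    + change (ball (Re l) eps (Re (sum_n a n))). rewrite Re_sum_n. exact Hr.
    + change (ball (Im l) eps (Im (sum_n a n))). rewrite Im_sum_n. exact Hi.
Qed.

Lemma im_le_Cmod (c : C) : Rabs (Im c) <= Cmod c.
Proof. eapply Rle_trans; [apply Rmax_r | apply (Rmax_Cmod c)]. Qed.
Lemma re_le_Cmod' (c : C) : Rabs (Re c) <= Cmod c.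
Proof. eapply Rle_trans; [apply Rmax_l | apply (Rmax_Cmod c)]. Qed.

Lemma sum_n_R_plus (f g : nat -> R) n :
  sum_n (fun k => (f k + g k)%R) n = (sum_n f n + sum_n g n)%R.
Proof. induction n. - rewrite !sum_O; auto. - rewrite !sum_Sn, IHn. unfold plus; simpl; ring. Qed.
Lemma sum_n_R_minus (f g : nat -> R) n :
  sum_n (fun k => (f k - g k)%R) n = (sum_n f n - sum_n g n)%R.
Proof. induction n. - rewrite !sum_O; auto. - rewrite !sum_Sn, IHn. unfold plus; simpl; ring. Qed.

Lemma ex_series_Re (u : nat -> C) :
  ex_series (fun n => Cmod (u n)) -> ex_series (fun n => Rabs (Re (u n))).
Proof.
  intros H. apply (@ex_series_le R_AbsRing R_CompleteNormedModule _ (fun n => Cmod (u n))); auto.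
  intros n. change (norm (Rabs (Re (u n)))) with (Rabs (Rabs (Re (u n)))).
  rewrite Rabs_Rabsolu. apply re_le_Cmod'.
Qed.
Lemma ex_series_Im (u : nat -> C) :
  ex_series (fun n => Cmod (u n)) -> ex_series (fun n => Rabs (Im (u n))).
Proof.
  intros H. apply (@ex_series_le R_AbsRing R_CompleteNormedModule _ (fun n => Cmod (u n))); auto.
  intros n. change (norm (Rabs (Im (u n)))) with (Rabs (Rabs (Im (u n)))).
  rewrite Rabs_Rabsolu. apply im_le_Cmod.
Qed.

Lemma C_cauchy (u v : nat -> C) (U V : C) :
  is_series u U -> is_series v V ->
  ex_series (fun n => Cmod (u n)) -> ex_series (fun n => Cmod (v n)) ->
  is_series (fun k => sum_n (fun i => u i * v (k - i)%nat) k) (U * V).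
Proof.
  intros HU HV AU AV.
  apply Cser_split in HU as [HU1 HU2]. apply Cser_split in HV as [HV1 HV2].
  pose proof (ex_series_Re _ AU) as AU1. pose proof (ex_series_Im _ AU) as AU2.
  pose proof (ex_series_Re _ AV) as AV1. pose proof (ex_series_Im _ AV) as AV2.
  apply Cser_split. split.
  - pose proof (is_series_mult _ _ _ _ HU1 HV1 AU1 AV1) as M1.
    pose proof (is_series_mult _ _ _ _ HU2 HV2 AU2 AV2) as M2.
    pose proof (is_series_minus _ _ _ _ M1 M2) as M.
    replace (Re (U * V)) with (plus (Re U * Re V)%R (opp (Im U * Im V)%R))
      by (destruct U, V; unfold Re, Im, plus, opp; simpl; ring).
    eapply is_series_ext; [|exact M].
    intros n. rewrite Re_sum_n, <- !sum_n_Reals.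
    change (plus ?a (opp ?b)) with (a - b)%R.
    rewrite <- sum_n_R_minus. apply sum_n_ext. intros k. simpl. reflexivity.
  - pose proof (is_series_mult _ _ _ _ HU1 HV2 AU1 AV2) as M1.
    pose proof (is_series_mult _ _ _ _ HU2 HV1 AU2 AV1) as M2.
    pose proof (is_series_plus _ _ _ _ M1 M2) as M.
    replace (Im (U * V)) with (plus (Re U * Im V)%R (Im U * Re V)%R)
      by (destruct U, V; unfold Re, Im, plus; simpl; ring).
    eapply is_series_ext; [|exact M].
    intros n. rewrite Im_sum_n, <- !sum_n_Reals.
    change (plus ?a ?b) with (a + b)%R.
    rewrite <- sum_n_R_plus. apply sum_n_ext. intros k. simpl. reflexivity.
Qed.

Inductive ex := EVar | ECst (c : C) | EAdd (a b : ex) | EMul (a b : ex) | EEps (a : ex).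

Fixpoint evalC (e : ex) (w z : C) : C :=
  match e with
  | EVar => w | ECst c => c | EAdd a b => evalC a w z + evalC b w z
  | EMul a b => evalC a w z * evalC b w z | EEps a => z * evalC a w z end.

Definition conv (x y : nat -> C) (k : nat) : C := sum_n (fun i => x i * y (k - i)%nat) k.
Definition cst_seq (c : C) (k : nat) : C := match k with O => c | _ => 0 end.
Definition shift_seq (x : nat -> C) (k : nat) : C := match k with O => 0 | S k' => x k' end.

Fixpoint evalS (e : ex) (a : nat -> C) : nat -> C :=
  match e with
  | EVar => a | ECst c => cst_seq c
  | EAdd p q => fun k => evalS p a k + evalS q a k
  | EMul p q => conv (evalS p a) (evalS q a)
  | EEps p => shift_seq (evalS p a) end.

Fixpoint evalP (e : ex) (N r : R) : R :=
  match e with EVar => N | ECst c => Cmod c | EAdd p q => (evalP p N r + evalP q N r)%R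
  | EMul p q => (evalP p N r * evalP q N r)%R | EEps p => (r * evalP p N r)%R end.

Fixpoint strict (e : ex) : Prop :=
  match e with EVar => False | ECst _ => True
  | EAdd p q | EMul p q => strict p /\ strict q | EEps _ => True end.

Lemma causal1 e : forall a b k, (forall i, (i <= k)%nat -> a i = b i) ->
  forall i, (i <= k)%nat -> evalS e a i = evalS e b i.
Proof.
  induction e; intros a b k H i Hi; simpl; auto.
  - erewrite IHe1, IHe2; eauto.
  - unfold conv. apply sum_n_ext_loc. intros j Hj.
    erewrite IHe1, IHe2; eauto; lia.
  - destruct i; simpl; auto. eapply IHe; eauto. lia.
Qed.

Lemma causal2 e : strict e -> forall a b k, (forall i, (i < k)%nat -> a i = b i) ->
  forall j, (j <= k)%nat -> evalS e a j = evalS e b j.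
Proof.
  induction e; intros He a b k H j Hj; simpl in *; auto.
  - destruct He.
  - destruct He as [He1 He2]. rewrite (IHe1 He1 a b k H j Hj), (IHe2 He2 a b k H j Hj). auto.
  - destruct He as [He1 He2]. unfold conv. apply sum_n_ext_loc. intros i Hi.
    rewrite (IHe1 He1 a b k H i), (IHe2 He2 a b k H (j - i)%nat); auto; lia.
  - destruct j; simpl; auto. apply (causal1 e a b j); auto. intros; apply H; lia.
Qed.

Fixpoint iterS (e : ex) (n : nat) : nat -> C :=
  match n with O => fun _ => 0 | S n => evalS e (iterS e n) end.
Definition hseq (e : ex) (k : nat) : C := iterS e (S k) k.

Lemma iter_stab e : strict e -> forall n i, (i < n)%nat -> iterS e n i = iterS e (S n) i.
Proof.
  intros He n. induction n; intros i Hi; [lia|].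
  change (evalS e (iterS e n) i = evalS e (iterS e (S n)) i).
  apply (causal2 e He _ _ i); [|lia]. intros j Hj. apply IHn. lia.
Qed.

Lemma iter_stab2 e : strict e -> forall n m i, (i < n)%nat -> (n <= m)%nat ->
  iterS e m i = iterS e n i.
Proof.
  intros He n m i Hi Hm. induction Hm; auto.
  rewrite <- iter_stab; auto. lia.
Qed.

Lemma hseq_iter e : strict e -> forall m i, (i < m)%nat -> hseq e i = iterS e m i.
Proof. intros He m i Hi. unfold hseq. symmetry. apply iter_stab2; auto. Qed.

Lemma hseq_fix e : strict e -> forall k, evalS e (hseq e) k = hseq e k.
Proof.
  intros He k.
  rewrite (causal2 e He (hseq e) (iterS e (S k)) k); [| |lia].
  - change (iterS e (S (S k)) k = hseq e k). rewrite (hseq_iter e He (S (S k))); auto.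
  - intros i Hi. apply hseq_iter; auto; lia.
Qed.

Lemma is_series_lim (a : nat -> R) l : is_series a l <-> is_lim_seq (sum_n a) l.
Proof. split; intros H; exact H. Qed.

Lemma psum_le_Series (a : nat -> R) : (forall n, 0 <= a n)%R -> ex_series a ->
  forall n, (sum_n a n <= Series a)%R.
Proof.
  intros Hp Ha n. apply Series_correct in Ha. apply is_series_lim in Ha.
  apply (is_lim_seq_incr_compare (sum_n a)); auto.
  intros m. rewrite sum_Sn. unfold plus; simpl. specialize (Hp (S m)). lra.
Qed.

Lemma Series_nonneg (a : nat -> R) : (forall n, 0 <= a n)%R -> ex_series a -> (0 <= Series a)%R.
Proof.
  intros Hp Ha. eapply Rle_trans; [|apply (psum_le_Series a Hp Ha 0)].
  rewrite sum_O. auto.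
Qed.

Lemma bounded_series (a : nat -> R) B : (forall n, 0 <= a n)%R ->
  (forall n, sum_n a n <= B)%R -> ex_series a /\ (Series a <= B)%R.
Proof.
  intros Hp Hb.
  destruct (ex_finite_lim_seq_incr (sum_n a) B) as [l Hl]; auto.
  { intros m. rewrite sum_Sn. unfold plus; simpl. specialize (Hp (S m)). lra. }
  assert (Hs : is_series a l) by (apply is_series_lim; exact Hl).
  split. exists l; auto.
  rewrite (is_series_unique _ _ Hs).
  assert (Rbar_le l B). { apply (is_lim_seq_le (sum_n a) (fun _ => B) l B); auto.
    apply is_lim_seq_const. }
  exact H.
Qed.

Lemma is_series_first {K : AbsRing} {V : NormedModule K} (x : V) :
  is_series (fun k => match k with O => x | _ => zero end) x.
Proof.
  unfold is_series. apply filterlim_ext with (fun _ => x).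
  - intros n. induction n. rewrite sum_O; auto. rewrite sum_Sn, <- IHn, plus_zero_r. auto.
  - apply filterlim_const.
Qed.

Definition nterm (r : R) (a : nat -> C) (k : nat) : R := (Cmod (a k) * r ^ k)%R.
Definition bnd r a B := ex_series (nterm r a) /\ (Series (nterm r a) <= B)%R.

Lemma nterm_pos r a k : (0 <= r)%R -> (0 <= nterm r a k)%R.
Proof. intros. unfold nterm. apply Rmult_le_pos. apply Cmod_ge_0. apply pow_le; auto. Qed.

Lemma Cmod_sum_n (f : nat -> C) n : (Cmod (sum_n f n) <= sum_n (fun k => Cmod (f k)) n)%R.
Proof.
  induction n. rewrite !sum_O. lra.
  rewrite !sum_Sn. eapply Rle_trans. apply Cmod_triangle. change (plus ?a ?b) with (a + b)%R. lra.
Qed.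

Lemma sum_n_Rmult_r (f : nat -> R) a n : (sum_n f n * a = sum_n (fun k => f k * a) n)%R.
Proof. induction n. rewrite !sum_O; auto. rewrite !sum_Sn, <- IHn. change (plus ?x ?y) with (x + y)%R. ring. Qed.

Lemma R_abs_norm (x : R) : norm x = Rabs x.
Proof. reflexivity. Qed.

Lemma bnd_eval e : forall r a N, (0 <= r)%R -> bnd r a N -> bnd r (evalS e a) (evalP e N r).
Proof.
  induction e; intros r a N Hr Ha; simpl; auto.
  -
    assert (Hs : is_series (nterm r (cst_seq c)) (Cmod c)).
    { eapply is_series_ext; [|apply (is_series_first (K:=R_AbsRing) (V:=R_NormedModule) (Cmod c))].
      intros [|k]; unfold nterm; simpl. ring. rewrite Cmod_0. change (@zero R_NormedModule) with 0%R. ring. }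
    split. exists (Cmod c); auto. rewrite (is_series_unique _ _ Hs). lra.
  - destruct (IHe1 r a N Hr Ha) as [A1 B1]. destruct (IHe2 r a N Hr Ha) as [A2 B2].
    assert (Hle : forall n, (0 <= nterm r (fun k => (evalS e1 a k + evalS e2 a k)%C) n <=
       (fun n => nterm r (evalS e1 a) n + nterm r (evalS e2 a) n) n)%R).
    { intros n. split. apply nterm_pos; auto. unfold nterm.
      rewrite <- Rmult_plus_distr_r. apply Rmult_le_compat_r. apply pow_le; auto. apply Cmod_triangle. }
    assert (Ex : ex_series (fun n => nterm r (evalS e1 a) n + nterm r (evalS e2 a) n)%R).
    { destruct A1 as [l1 H1]; destruct A2 as [l2 H2]. exists (l1 + l2)%R. apply (is_series_plus _ _ _ _ H1 H2). }
    split.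
    + refine (@ex_series_le R_AbsRing R_CompleteNormedModule _ _ _ Ex).
      intros n. rewrite R_abs_norm, Rabs_pos_eq; apply Hle.
    + eapply Rle_trans. apply Series_le; [exact Hle|exact Ex].
      rewrite Series_plus; auto. lra.
  - destruct (IHe1 r a N Hr Ha) as [A1 B1]. destruct (IHe2 r a N Hr Ha) as [A2 B2].
    set (x := evalS e1 a) in *. set (y := evalS e2 a) in *.
    pose proof (is_series_mult_pos _ _ _ _ (Series_correct _ A1) (Series_correct _ A2)
      (fun k => nterm_pos r x k Hr) (fun k => nterm_pos r y k Hr)) as HM.
    assert (Hle : forall n, (0 <= nterm r (conv x y) n <=
       sum_f_R0 (fun k => nterm r x k * nterm r y (n - k)%nat) n)%R).
    { intros n. split. apply nterm_pos; auto. rewrite <- sum_n_Reals.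
      unfold nterm, conv. eapply Rle_trans.
      apply Rmult_le_compat_r. apply pow_le; auto. apply Cmod_sum_n.
      rewrite sum_n_Rmult_r. apply Req_le. apply sum_n_ext_loc. intros k Hk.
      rewrite Cmod_mult.
      replace (r ^ n)%R with (r ^ k * r ^ (n - k))%R by (rewrite <- pow_add; f_equal; lia). match goal with |- ?a = ?b => change (@eq R a b) end; ring. }
    assert (Ex : ex_series (fun n => sum_f_R0 (fun k => (nterm r x k * nterm r y (n - k)%nat)%R) n)).
    { eexists; exact HM. }
    split.
    + refine (@ex_series_le R_AbsRing R_CompleteNormedModule _ _ _ Ex).
      intros n. rewrite R_abs_norm, Rabs_pos_eq; apply Hle.
    + eapply Rle_trans. apply Series_le; [exact Hle|exact Ex].
      rewrite (is_series_unique _ _ HM).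
      apply Rmult_le_compat; auto; apply Series_nonneg; auto; intros; apply nterm_pos; auto.
  - destruct (IHe r a N Hr Ha) as [A1 B1].
    set (x := evalS e a) in *.
    assert (Hs : is_series (nterm r (shift_seq x)) (r * Series (nterm r x))%R).
    { apply is_series_decr_1.
      assert (Hz : nterm r (shift_seq x) 0 = 0%R) by (unfold nterm; simpl; rewrite Cmod_0; ring).
      rewrite Hz. change (opp 0%R) with (- 0)%R. change (plus ?a ?b) with (a + b)%R.
      rewrite Ropp_0, Rplus_0_r.
      eapply is_series_ext; [|apply (is_series_scal_l (K:=R_AbsRing) r _ _ (Series_correct _ A1))].
      intros n. unfold nterm; simpl. change (scal r ?b) with (r * b)%R. ring. }
    split. eexists; exact Hs. rewrite (is_series_unique _ _ Hs).
    apply Rmult_le_compat_l; auto.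
Qed.

Lemma Cmod_pow_n (z : C) k : Cmod (pow_n z k) = (Cmod z ^ k)%R.
Proof. induction k. simpl. apply Cmod_1. simpl. change (mult z (pow_n z k)) with (z * pow_n z k). rewrite Cmod_mult, IHk. auto. Qed.

Lemma eval_pseries e : forall a z W N, bnd (Cmod z) a N -> is_pseries a z W ->
  is_pseries (evalS e a) z (evalC e W z).
Proof.
  induction e; intros a z W N Hb Hs; simpl; auto.
  - unfold is_pseries. eapply is_series_ext; [|apply (is_series_first (K:=C_AbsRing) (V:=C_NormedModule) c)].
    intros [|k]; simpl. rewrite scal_one. auto. change (scal ?a ?b) with (a * b). rewrite Cmult_0_r. reflexivity.
  - eapply is_pseries_ext; [|apply (is_pseries_plus _ _ _ _ _ (IHe1 a z W N Hb Hs) (IHe2 a z W N Hb Hs))].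
    intros n. reflexivity.
  - pose proof (IHe1 a z W N Hb Hs) as H1. pose proof (IHe2 a z W N Hb Hs) as H2.
    destruct (bnd_eval e1 (Cmod z) a N (Cmod_ge_0 z) Hb) as [A1 _].
    destruct (bnd_eval e2 (Cmod z) a N (Cmod_ge_0 z) Hb) as [A2 _].
    set (x := evalS e1 a) in *. set (y := evalS e2 a) in *.
    unfold is_pseries in *.
    assert (AA : forall v : nat -> C, ex_series (nterm (Cmod z) v) ->
       ex_series (fun n => Cmod (scal (pow_n z n) (v n)))).
    { intros v Hv. eapply ex_series_ext; [|exact Hv]. intros n. unfold nterm.
      change (scal (pow_n z n) (v n)) with (pow_n z n * v n). rewrite Cmod_mult, Cmod_pow_n. match goal with |- ?a = ?b => change (@eq R a b) end. ring. }
    pose proof (C_cauchy _ _ _ _ H1 H2 (AA x A1) (AA y A2)) as HC.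
    eapply is_series_ext; [|exact HC].
    intros n. simpl. unfold conv. change (scal (pow_n z n) ?b) with (pow_n z n * b).
    rewrite <- (sum_n_mult_l (K:=C_Ring)). apply sum_n_ext_loc. intros k Hk.
    change (scal (pow_n z ?m) ?b) with (pow_n z m * b). change (mult ?a ?b) with (a * b).
    replace (pow_n z n) with (pow_n z k * pow_n z (n - k)%nat).
    match goal with |- ?a = ?b => change (@eq C a b) end. ring. rewrite <- (pow_n_plus (K:=C_Ring)). f_equal. lia.
  - eapply is_pseries_ext; [|apply (is_pseries_incr_1 _ _ _ (IHe a z W N Hb Hs))].
    intros [|n]; reflexivity.
Qed.

Lemma evalP_strict0 e : strict e -> forall N N', evalP e N 0 = evalP e N' 0.
Proof.
  induction e; simpl; intros He N N'; try tauto.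
  - destruct He; rewrite (IHe1 H N N'), (IHe2 H0 N N'); auto.
  - destruct He; rewrite (IHe1 H N N'), (IHe2 H0 N N'); auto.
  - ring.
Qed.

Lemma evalP_nonneg e N r : (0 <= N)%R -> (0 <= r)%R -> (0 <= evalP e N r)%R.
Proof.
  intros HN Hr. induction e; simpl; auto.
  - apply Cmod_ge_0.
  - lra.
  - apply Rmult_le_pos; auto.
  - apply Rmult_le_pos; auto.
Qed.

Lemma evalP_lin e N : (0 <= N)%R -> exists K, (0 <= K)%R /\
  forall r, (0 <= r <= 1)%R -> (evalP e N r <= evalP e N 0 + r * K)%R.
Proof.
  intros HN. induction e; simpl.
  - exists 0%R. split. lra. intros; lra.
  - exists 0%R. split. lra. intros; lra.
  - destruct IHe1 as [K1 [HK1 H1]]. destruct IHe2 as [K2 [HK2 H2]].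
    exists (K1 + K2)%R. split. lra. intros r Hr. specialize (H1 r Hr). specialize (H2 r Hr). nra.
  - destruct IHe1 as [K1 [HK1 H1]]. destruct IHe2 as [K2 [HK2 H2]].
    set (a0 := evalP e1 N 0). set (b0 := evalP e2 N 0).
    assert (Ha0 : (0 <= a0)%R) by (apply evalP_nonneg; lra).
    assert (Hb0 : (0 <= b0)%R) by (apply evalP_nonneg; lra).
    exists (a0 * K2 + K1 * b0 + K1 * K2)%R. split. nra.
    intros r Hr. specialize (H1 r Hr). specialize (H2 r Hr).
    assert (Ha : (0 <= evalP e1 N r)%R) by (apply evalP_nonneg; lra).
    assert (Hb : (0 <= evalP e2 N r)%R) by (apply evalP_nonneg; lra).
    apply Rle_trans with ((a0 + r * K1) * (b0 + r * K2))%R.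
    apply Rmult_le_compat; auto.
    assert (r * r * (K1 * K2) <= r * (K1 * K2))%R.
    { apply Rmult_le_compat_r. nra. nra. }
    nra.
  - destruct IHe as [K [HK H]].
    exists (evalP e N 0 + K)%R. split.
    assert (0 <= evalP e N 0)%R by (apply evalP_nonneg; lra). lra.
    intros r Hr. specialize (H r Hr).
    assert (0 <= evalP e N 0)%R by (apply evalP_nonneg; lra).
    assert (r * evalP e N r <= r * (evalP e N 0 + K))%R.
    { apply Rmult_le_compat_l. lra. nra. }
    lra.
Qed.

Lemma bnd_zero r R : (0 <= R)%R -> bnd r (fun _ => 0) R.
Proof.
  intros HR.
  assert (Hs : is_series (nterm r (fun _ => 0)) 0%R).
  { eapply is_series_ext; [|apply (is_series_first (K:=R_AbsRing) (V:=R_NormedModule) 0%R)].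
    intros [|k]; unfold nterm; rewrite Cmod_0; simpl; try ring. change (@zero R_NormedModule) with 0%R; ring. }
  split. eexists; exact Hs. rewrite (is_series_unique _ _ Hs). auto.
Qed.

Lemma iter_bnd e r R : (0 <= r)%R -> (0 <= R)%R -> (evalP e R r <= R)%R ->
  forall n, bnd r (iterS e n) R.
Proof.
  intros Hr HR He n. induction n.
  - apply bnd_zero; auto.
  - simpl. destruct (bnd_eval e r _ R Hr IHn) as [A B]. split; auto. lra.
Qed.

Lemma hseq_bnd e r R : strict e -> (0 <= r)%R -> (0 <= R)%R -> (evalP e R r <= R)%R ->
  bnd r (hseq e) R.
Proof.
  intros Hs Hr HR He.
  apply bounded_series. intros; apply nterm_pos; auto.
  intros n. destruct (iter_bnd e r R Hr HR He (S n)) as [A B].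
  eapply Rle_trans; [|exact B].
  eapply Rle_trans; [|apply psum_le_Series; auto; intros; apply nterm_pos; auto].
  apply Req_le. apply sum_n_ext_loc. intros k Hk. unfold nterm.
  rewrite (hseq_iter e Hs (S n) k); auto. lia.
Qed.

Theorem fixpoint e : strict e -> exists rho R, (0 < rho)%R /\ (0 <= R)%R /\ bnd rho (hseq e) R.
Proof.
  intros Hs.
  set (R0 := (evalP e 0 0 + 1)%R).
  assert (HR0 : (0 <= R0)%R) by (unfold R0; pose proof (evalP_nonneg e 0 0); lra).
  destruct (evalP_lin e R0 HR0) as [K [HK HL]].
  set (rho := (/ (K + 1))%R).
  assert (Hrho : (0 < rho)%R) by (unfold rho; apply Rinv_0_lt_compat; lra).
  assert (Hrho1 : (rho <= 1)%R).
  { unfold rho. rewrite <- Rinv_1. apply Rinv_le_contravar; lra. }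
  assert (HrK : (rho * K < 1)%R).
  { unfold rho. apply (Rmult_lt_reg_l (K + 1)); [lra|].
    rewrite <- Rmult_assoc, Rinv_r; lra. }
  exists rho, R0. split; auto. split; auto.
  apply hseq_bnd; auto. lra.
  specialize (HL rho (conj (Rlt_le _ _ Hrho) Hrho1)).
  rewrite (evalP_strict0 e Hs R0 0) in HL. unfold R0 at 2. lra.
Qed.

Lemma Cser_norm_le (u : nat -> C) W B : is_series u W ->
  (forall n, Cmod (sum_n u n) <= B)%R -> (Cmod W <= B)%R.
Proof.
  intros Hu Hb.
  assert (H : is_lim_seq (fun n => Cmod (sum_n u n)) (Cmod W)).
  { pose proof (filterlim_comp _ _ _ (sum_n u) norm eventually (locally W) (locally (norm W)) Hu (filterlim_norm W)) as Hc.
    assert (Hc' : is_lim_seq (fun n => norm (sum_n u n)) (norm W)) by (unfold is_lim_seq; simpl; exact Hc).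
    exact Hc'. }
  assert (Rbar_le (Cmod W) B).
  { apply (is_lim_seq_le _ (fun _ => B) _ _ Hb H). apply is_lim_seq_const. }
  exact H0.
Qed.

Lemma fix_eval e rho R : strict e -> (0 <= rho)%R -> bnd rho (hseq e) R ->
  forall z, (Cmod z <= rho)%R -> exists W, is_pseries (hseq e) z W /\ W = evalC e W z /\ (Cmod W <= R)%R.
Proof.
  intros Hs Hrho [A B] z Hz.
  assert (Hle : forall n, (0 <= nterm (Cmod z) (hseq e) n <= nterm rho (hseq e) n)%R).
  { intros n. split. apply nterm_pos, Cmod_ge_0. unfold nterm.
    apply Rmult_le_compat_l. apply Cmod_ge_0. apply pow_incr. split; auto. apply Cmod_ge_0. }
  assert (Hb : bnd (Cmod z) (hseq e) R).
  { split. refine (@ex_series_le R_AbsRing R_CompleteNormedModule _ _ _ A).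
    intros n. rewrite R_abs_norm, Rabs_pos_eq; apply Hle.
    eapply Rle_trans; [|exact B]. apply Series_le; auto. }
  assert (Ex : ex_series (fun k => scal (pow_n z k) (hseq e k))).
  { refine (@ex_series_le C_AbsRing C_CompleteNormedModule _ _ _ (proj1 Hb)).
    intros n. change (norm ?x) with (Cmod x). unfold nterm.
    change (scal (pow_n z n) (hseq e n)) with (pow_n z n * hseq e n).
    rewrite Cmod_mult, Cmod_pow_n. apply Req_le. ring. }
  destruct Ex as [W HW].
  exists W. split; auto. split.
  - pose proof (eval_pseries e _ z W R Hb HW) as HE.
    assert (HE' : is_pseries (hseq e) z (evalC e W z)).
    { eapply is_pseries_ext; [|exact HE]. intros; apply hseq_fix; auto. }
    apply (filterlim_locally_unique (F := eventually) _ _ _ HW HE').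
  - apply (Cser_norm_le _ W R HW). intros n.
    eapply Rle_trans. apply Cmod_sum_n.
    eapply Rle_trans; [|exact (proj2 Hb)].
    eapply Rle_trans; [|apply (psum_le_Series _ (fun k => nterm_pos _ _ k (Cmod_ge_0 z)) (proj1 Hb) n)].
    apply Req_le. apply sum_n_ext. intros k. unfold nterm.
    change (scal (pow_n z k) (hseq e k)) with (pow_n z k * hseq e k).
    rewrite Cmod_mult, Cmod_pow_n. match goal with |- ?a = ?b => change (@eq Rdefinitions.RbaseSymbolsImpl.R a b) end. ring.
Qed.


Lemma MVT_bound (f f' : R -> R) (x K : R) :
  (forall c, derivable_pt_lim f c (f' c)) ->
  (forall c, (Rabs c <= Rabs x)%R -> (Rabs (f' c) <= K)%R) ->
  (Rabs (f x - f 0) <= K * Rabs x)%R.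
Proof.
  intros Hd Hb. destruct (MVT_abs f f' 0 x) as [c [Hc Hr]].
  intros; apply Hd.
  rewrite Hc, Rminus_0_r. apply Rmult_le_compat_r. apply Rabs_pos. apply Hb.
  unfold Rmin, Rmax in Hr. destruct (Rle_dec 0 x); unfold Rabs;
  destruct (Rcase_abs c), (Rcase_abs x); lra.
Qed.

Lemma exp_le3 c : (c <= 1)%R -> (exp c <= 3)%R.
Proof.
  intros H. eapply Rle_trans; [|apply exp_le_3].
  destruct (Req_dec c 1). subst; lra. left; apply exp_increasing; lra.
Qed.

Lemma bnd_sin x : (Rabs (sin x) <= Rabs x)%R.
Proof.
  replace (sin x) with (sin x - sin 0)%R by (rewrite sin_0; ring).
  rewrite <- (Rmult_1_l (Rabs x)). apply (MVT_bound sin cos).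
  intros; apply derivable_pt_lim_sin.
  intros c _. pose proof (COS_bound c). unfold Rabs; destruct Rcase_abs; lra.
Qed.

Lemma bnd_cos x : (Rabs (cos x - 1) <= x ^ 2)%R.
Proof.
  replace (cos x - 1)%R with (cos x - cos 0)%R by (rewrite cos_0; ring).
  rewrite <- pow2_abs. replace (Rabs x ^ 2)%R with (Rabs x * Rabs x)%R by ring.
  apply (MVT_bound cos (fun t => - sin t)%R).
  intros; apply derivable_pt_lim_cos.
  intros c Hc. rewrite Rabs_Ropp. eapply Rle_trans. apply bnd_sin. auto.
Qed.

Lemma bnd_sinx x : (Rabs x <= 1)%R -> (Rabs (sin x - x) <= x ^ 2)%R.
Proof.
  intros Hx.
  replace (sin x - x)%R with ((sin x - x) - (sin 0 - 0))%R by (rewrite sin_0; ring).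
  rewrite <- pow2_abs. replace (Rabs x ^ 2)%R with (Rabs x * Rabs x)%R by ring.
  apply (MVT_bound (fun t => sin t - t)%R (fun t => cos t - 1)%R).
  intros c. apply is_derive_Reals. auto_derive; auto. ring.
  intros c Hc. eapply Rle_trans. apply bnd_cos.
  rewrite <- pow2_abs. pose proof (Rabs_pos c). nra.
Qed.

Lemma bnd_exp1 x : (Rabs x <= 1)%R -> (Rabs (exp x - 1) <= 3 * Rabs x)%R.
Proof.
  intros Hx. replace (exp x - 1)%R with (exp x - exp 0)%R by (rewrite exp_0; ring).
  apply (MVT_bound exp exp). intros; apply derivable_pt_lim_exp.
  intros c Hc. rewrite Rabs_pos_eq. apply exp_le3. unfold Rabs in *; destruct Rcase_abs, Rcase_abs; lra.
  left; apply exp_pos.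
Qed.

Lemma bnd_exp2 x : (Rabs x <= 1)%R -> (Rabs (exp x - 1 - x) <= 3 * x ^ 2)%R.
Proof.
  intros Hx.
  replace (exp x - 1 - x)%R with ((exp x - x) - (exp 0 - 0))%R by (rewrite exp_0; ring).
  rewrite <- pow2_abs. replace (3 * Rabs x ^ 2)%R with ((3 * Rabs x) * Rabs x)%R by ring.
  apply (MVT_bound (fun t => exp t - t)%R (fun t => exp t - 1)%R).
  intros c. apply is_derive_Reals. auto_derive; auto. ring.
  intros c Hc. eapply Rle_trans. apply bnd_exp1. lra. pose proof (Rabs_pos c). lra.
Qed.

Lemma Cmod_le_sum (c : C) : (Cmod c <= Rabs (fst c) + Rabs (snd c))%R.
Proof.
  destruct c as [x y]. unfold Cmod; simpl.
  rewrite <- (sqrt_Rsqr (Rabs x + Rabs y)) by (pose proof (Rabs_pos x); pose proof (Rabs_pos y); lra).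
  apply sqrt_le_1_alt. unfold Rsqr.
  pose proof (pow2_abs x); pose proof (pow2_abs y). simpl in *. pose proof (Rabs_pos x); pose proof (Rabs_pos y). nra.
Qed.

Lemma cexp_quad (h : C) : (Cmod h <= 1)%R -> (Cmod (cexp h - 1 - h) <= 12 * Cmod h ^ 2)%R.
Proof.
  intros Hh. destruct h as [a b].
  pose proof (re_le_Cmod (a, b)) as Ha. pose proof (Rmax_Cmod (a,b)) as Hm.
  simpl in Ha, Hm.
  assert (Hb : (Rabs b <= Cmod (a, b))%R) by (eapply Rle_trans; [apply Rmax_r|exact Hm]).
  set (t := Cmod (a, b)) in *.
  eapply Rle_trans. apply Cmod_le_sum.
  unfold cexp; simpl.
  assert (HE : (0 < exp a <= 3)%R) by (split; [apply exp_pos| apply exp_le3; unfold Rabs in Ha; destruct Rcase_abs; lra]).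
  pose proof (bnd_cos b) as Hc. pose proof (bnd_sinx b ltac:(lra)) as Hs.
  pose proof (bnd_exp1 a ltac:(lra)) as He1. pose proof (bnd_exp2 a ltac:(lra)) as He2.
  replace (exp a * cos b - 1 - a)%R with (exp a * (cos b - 1) + (exp a - 1 - a))%R by ring.
  replace (exp a * sin b - 0 - b)%R with (exp a * (sin b - b) + (exp a - 1) * b)%R by ring.
  pose proof (Rabs_triang (exp a * (cos b - 1)) (exp a - 1 - a)).
  pose proof (Rabs_triang (exp a * (sin b - b)) ((exp a - 1) * b)).
  rewrite !Rabs_mult in *. rewrite (Rabs_pos_eq (exp a)) in * by lra.
  assert (b ^ 2 <= t ^ 2)%R by (rewrite <- pow2_abs; pose proof (Rabs_pos b); nra).
  assert (a ^ 2 <= t ^ 2)%R by (rewrite <- pow2_abs; pose proof (Rabs_pos a); nra).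
  assert (Rabs a * Rabs b <= t ^ 2)%R by (pose proof (Rabs_pos a); pose proof (Rabs_pos b); nra).
  pose proof (Rabs_pos (cos b - 1)). pose proof (Rabs_pos (sin b - b)). pose proof (Rabs_pos (exp a - 1)).
  pose proof (Rabs_pos b).
  assert (Rabs (exp a - 1) * Rabs b <= 3 * Rabs a * Rabs b)%R by (apply Rmult_le_compat_r; lra).
  assert (exp a * Rabs (cos b - 1) <= 3 * t ^ 2)%R by (apply Rmult_le_compat; lra).
  assert (exp a * Rabs (sin b - b) <= 3 * t ^ 2)%R by (apply Rmult_le_compat; lra).
  replace (exp a * cos b + - (1) + - a)%R with (exp a * (cos b - 1) + (exp a - 1 - a))%R by ring.
  replace (exp a * sin b + - 0 + - b)%R with (exp a * (sin b - b) + (exp a - 1) * b)%R by ring.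
  replace (t * (t * 1))%R with (t ^ 2)%R by ring.
  lra.
Qed.

Lemma cexp_add x y : cexp (x + y) = cexp x * cexp y.
Proof.
  destruct x as [a b], y as [c d]. unfold cexp, Cmult, Cplus; simpl.
  rewrite exp_plus, cos_plus, sin_plus. f_equal; ring.
Qed.

Lemma cexp_0 : cexp 0 = 1.
Proof. unfold cexp; simpl. rewrite exp_0, cos_0, sin_0. apply injective_projections; simpl; ring. Qed.

Lemma cexp_ne0 x : cexp x <> 0.
Proof.
  intros H. unfold cexp in H. injection H as H1 H2.
  pose proof (exp_pos (Re x)). pose proof (sin2_cos2 (Im x)).
  apply Rmult_integral in H1 as [H1|H1]; [lra|].
  apply Rmult_integral in H2 as [H2|H2]; [lra|].
  unfold Rsqr in *. rewrite H1, H2 in *. lra.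
Qed.

Lemma cexp_neg x : cexp (- x) = / cexp x.
Proof.
  assert (H : cexp (- x) * cexp x = 1).
  { rewrite <- cexp_add. replace (- x + x) with (RtoC 0) by ring. apply cexp_0. }
  pose proof (cexp_ne0 x).
  rewrite <- (Cmult_1_l (/ cexp x)), <- H. field. auto.
Qed.

Lemma cexp_pow x n : pow_n (cexp x) n = cexp (RtoC (INR n) * x).
Proof.
  induction n.
  - simpl. replace (RtoC 0 * x) with (RtoC 0) by ring. rewrite cexp_0. reflexivity.
  - simpl pow_n. rewrite IHn. change (mult ?a ?b) with (a * b).
    rewrite <- cexp_add. f_equal. rewrite S_INR, RtoC_plus. ring.
Qed.

Lemma cexp_deriv z : cderiv cexp z (cexp z).
Proof.
  unfold cderiv, is_derive, filterdiff. split. apply is_linear_scal_l.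
  intros x Hx. apply (@is_filter_lim_locally_unique C_AbsRing (AbsRing_NormedModule C_AbsRing)) in Hx. subst x.
  intros eps.
  set (c := Cmod (cexp z)).
  assert (Hc : (0 <= c)%R) by apply Cmod_ge_0.
  set (d := Rmin 1 (eps / (12 * c + 1))).
  assert (Hd : (0 < d)%R).
  { unfold d. apply Rmin_pos. lra. apply Rdiv_lt_0_compat. apply cond_pos. lra. }
  exists (mkposreal d Hd). intros y Hy. change C in y. change (Cmod (minus y z) < d)%R in Hy.
  change (norm ?u) with (Cmod u) in *.
  change (minus y z) with (y - z) in *.
  change (minus (minus (cexp y) (cexp z)) (scal (y - z) (cexp z))) with (cexp y - cexp z - (y - z) * cexp z).
  set (h := y - z) in *.
  assert (Ey : cexp y = cexp z * cexp h) by (rewrite <- cexp_add; f_equal; unfold h; ring).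
  assert (E : cexp y - cexp z - h * cexp z = cexp z * (cexp h - 1 - h)) by (rewrite Ey; ring).
  rewrite E, Cmod_mult. fold c.
  assert (Hh1 : (Cmod h <= 1)%R) by (assert (d <= 1)%R by apply Rmin_l; lra).
  pose proof (cexp_quad h Hh1) as Q.
  assert (Hhe : (Cmod h * (12 * c + 1) <= eps)%R).
  { assert (d <= eps / (12 * c + 1))%R by apply Rmin_r.
    apply (Rmult_le_reg_r (/ (12 * c + 1))). apply Rinv_0_lt_compat; lra.
    rewrite Rmult_assoc, Rinv_r by lra. unfold Rdiv in H. lra. }
  pose proof (Cmod_ge_0 h). pose proof (cond_pos eps).
  apply Rle_trans with (c * (12 * Cmod h ^ 2))%R.
  apply Rmult_le_compat_l; auto.
  simpl. nra.
Qed.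

Definition theta (M j : nat) : R := (2 * PI * INR j / INR M)%R.
Definition omega (M j : nat) : C := cexp (0%R, theta M j).

Lemma Cmod_cexp x : Cmod (cexp x) = exp (Re x).
Proof.
  unfold cexp, Cmod; cbn [fst snd].
  replace ((exp (Re x) * cos (Im x)) ^ 2 + (exp (Re x) * sin (Im x)) ^ 2)%R with (exp (Re x) ^ 2)%R.
  apply sqrt_pow2. left; apply exp_pos.
  pose proof (sin2_cos2 (Im x)). unfold Rsqr in H. nra.
Qed.

Lemma Cmod_omega M j : Cmod (omega M j) = R1.
Proof. unfold omega. rewrite Cmod_cexp. simpl. apply exp_0. Qed.

Lemma omega_pow M j : (0 < M)%nat -> pow_n (omega M j) M = RtoC 1.
Proof.
  intros HM. unfold omega. rewrite cexp_pow.
  assert (HMr : INR M <> 0%R) by (apply not_0_INR; lia).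
  unfold cexp, Cmult, theta; simpl.
  replace (INR M * 0 - 0 * (2 * PI * INR j / INR M))%R with 0%R by ring.
  replace (INR M * (2 * PI * INR j / INR M) + 0 * 0)%R with (0 + 2 * INR j * PI)%R by (field; auto).
  rewrite cos_period, sin_period, exp_0, cos_0, sin_0. apply injective_projections; simpl; ring.
Qed.

Lemma omega_inj M i j : (i < M)%nat -> (j < M)%nat -> omega M i = omega M j -> i = j.
Proof.
  intros Hi Hj H.
  assert (HMr : (0 < INR M)%R) by (apply lt_0_INR; lia).
  unfold omega, cexp in H; simpl in H. rewrite exp_0 in H. injection H as H1 H2.
  rewrite !Rmult_1_l in H1, H2.
  assert (key : forall p q, (p < q < M)%nat -> cos (theta M q - theta M p) = 1%R -> sin (theta M q - theta M p) = 0%R -> False).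
  { intros p q Hpq Hc Hs.
    set (t := (theta M q - theta M p)%R) in *.
    assert (Ht : t = (2 * PI * (INR q - INR p) / INR M)%R) by (unfold t, theta; field; lra).
    assert (Hqp : (1 <= INR q - INR p)%R) by (rewrite <- minus_INR by lia; apply (le_INR 1); lia).
    assert (Hqp2 : (INR q - INR p < INR M)%R) by (pose proof (lt_INR q M ltac:(lia)); pose proof (pos_INR p); lra).
    pose proof PI_RGT_0.
    assert (Ht0 : (0 < t)%R) by (rewrite Ht; apply Rdiv_lt_0_compat; nra).
    assert (Ht2 : (t < 2 * PI)%R).
    { rewrite Ht. apply (Rmult_lt_reg_r (INR M)); auto. unfold Rdiv. rewrite Rmult_assoc, Rinv_l by lra. nra. }
    destruct (Rtotal_order t PI) as [Hl|[He|Hg]].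
    - pose proof (sin_gt_0 t Ht0 Hl). lra.
    - rewrite He, cos_PI in Hc. lra.
    - pose proof (sin_lt_0 t Hg Ht2). lra. }
  destruct (Nat.lt_total i j) as [Hl|[He|Hg]]; auto; exfalso.
  - apply (key i j); [lia| |]; rewrite ?cos_minus, ?sin_minus, <- H1, <- H2.
    pose proof (sin2_cos2 (theta M i)); unfold Rsqr in *; lra. ring.
  - apply (key j i); [lia| |]; rewrite ?cos_minus, ?sin_minus, H1, H2.
    pose proof (sin2_cos2 (theta M j)); unfold Rsqr in *; lra. ring.
Qed.

Lemma finite_min (n : nat) (P : nat -> R -> Prop) :
  (forall j r r', (0 < r' <= r)%R -> P j r -> P j r') ->
  (forall j, (j < n)%nat -> exists r, (0 < r)%R /\ P j r) ->
  exists r, (0 < r)%R /\ forall j, (j < n)%nat -> P j r.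
Proof.
  intros Hd. induction n; intros H.
  - exists 1%R. split. lra. intros; lia.
  - destruct IHn as [r1 [Hr1 H1]]. intros j Hj; apply H; lia.
    destruct (H n) as [r2 [Hr2 H2]]. lia.
    exists (Rmin r1 r2). split. apply Rmin_pos; auto.
    intros j Hj. destruct (Nat.eq_dec j n).
    + subst. apply (Hd n r2). split. apply Rmin_pos; auto. apply Rmin_r. auto.
    + apply (Hd j r1). split. apply Rmin_pos; auto. apply Rmin_l. apply H1. lia.
Qed.

Lemma omega_sep M : (0 < M)%nat -> exists d, (0 < d)%R /\
  forall i j, (i < M)%nat -> (j < M)%nat -> i <> j -> (d <= Cmod (omega M i - omega M j))%R.
Proof.
  intros HM.
  destruct (finite_min M (fun i d => forall j, (j < M)%nat -> i <> j -> (d <= Cmod (omega M i - omega M j))%R)) as [d [Hd H]].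
  - intros j r r' Hr Hp k Hk Hne. specialize (Hp k Hk Hne). lra.
  - intros i Hi.
    destruct (finite_min M (fun j d => i <> j -> (d <= Cmod (omega M i - omega M j))%R)) as [d [Hd H]].
    + intros j r r' Hr Hp Hne. specialize (Hp Hne). lra.
    + intros j Hj. destruct (Nat.eq_dec i j).
      * exists 1%R. split. lra. intros; contradiction.
      * exists (Cmod (omega M i - omega M j)). split; [|intros; lra].
        apply Cmod_gt_0. intros He. apply n. apply (omega_inj M); auto.
        apply Ceq_minus; auto.
    + exists d. split; auto.
  - exists d; split; auto.
Qed.

Fixpoint csum (f : nat -> C) (n : nat) : C :=
  match n with O => 0 | S n => csum f n + f n end.

Lemma csum_ext f g n : (forall k, (k < n)%nat -> f k = g k) -> csum f n = csum g n.
Proof. induction n; simpl; intros H; auto. rewrite IHn, H; auto. Qed.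

Lemma csum_sum_n (f : nat -> C) n : sum_n f n = csum f (S n).
Proof.
  induction n. rewrite sum_O. simpl. ring.
  rewrite sum_Sn, IHn. simpl. reflexivity.
Qed.

Lemma csum_sum_n_m (g : nat -> C) n : (1 <= n)%nat ->
  sum_n_m g 1 (n - 1) = csum (fun k => match k with O => 0 | _ => g k end) n.
Proof.
  intros Hn. destruct n. lia. replace (S n - 1)%nat with n by lia. clear Hn.
  induction n.
  - rewrite sum_n_m_zero by lia. simpl. change (@zero C_AbelianMonoid) with (RtoC 0). ring.
  - rewrite sum_n_Sm by lia. rewrite IHn. simpl. reflexivity.
Qed.

Lemma csum_mult_l c f n : c * csum f n = csum (fun k => c * f k) n.
Proof. induction n; simpl. ring. rewrite <- IHn. ring. Qed.

Lemma csum_plus f g n : csum (fun k => f k + g k) n = csum f n + csum g n.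
Proof. induction n; simpl. ring. rewrite IHn. ring. Qed.

Lemma csum_opp f n : csum (fun k => - f k) n = - csum f n.
Proof. induction n; simpl. ring. rewrite IHn. ring. Qed.

Lemma Cmult_integral (a b : C) : a * b = 0 -> a = 0 \/ b = 0.
Proof.
  intros H. destruct (Ceq_dec b 0) as [Hb|Hb]; auto. left.
  replace a with (a * b * / b) by (field; auto). rewrite H. ring.
Qed.

Lemma vander n : forall (w mu : nat -> C),
  (forall i j, (i < n)%nat -> (j < n)%nat -> mu i = mu j -> i = j) ->
  (forall m, csum (fun j => w j * pow_n (mu j) m) n = 0) ->
  forall j, (j < n)%nat -> w j = 0.
Proof.
  induction n; intros w mu Hinj Hs j Hj. lia.
  assert (Hw' : forall j, (j < n)%nat -> w j * (mu j - mu n) = 0).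
  { apply (IHn (fun j => w j * (mu j - mu n)) mu).
    - intros; apply Hinj; auto; lia.
    - intros m. pose proof (Hs (S m)) as H1. pose proof (Hs m) as H0. simpl in H1, H0.
      replace (csum (fun j => w j * (mu j - mu n) * pow_n (mu j) m) n) with
        (csum (fun j => w j * pow_n (mu j) (S m)) n - mu n * csum (fun j => w j * pow_n (mu j) m) n).
      + simpl pow_n in *. change (mult ?a ?b) with (a * b) in *.
        assert (E1 : csum (fun j => w j * (mu j * pow_n (mu j) m)) n = - (w n * (mu n * pow_n (mu n) m))).
        { rewrite <- (Cplus_0_r (- _)), <- H1. ring. }
        assert (E0 : csum (fun j => w j * pow_n (mu j) m) n = - (w n * pow_n (mu n) m)).
        { rewrite <- (Cplus_0_r (- _)), <- H0. ring. }
        rewrite E1, E0. ring.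
      + rewrite csum_mult_l. unfold Cminus. 
        replace (- csum (fun k => mu n * (w k * pow_n (mu k) m)) n) with
          (csum (fun k => - (mu n * (w k * pow_n (mu k) m))) n).
        rewrite <- csum_plus. apply csum_ext. intros k Hk. simpl. change (mult ?a ?b) with (a * b). ring.
        apply csum_opp. }
  assert (Hlow : forall j, (j < n)%nat -> w j = 0).
  { intros k Hk. specialize (Hw' k Hk).
    apply Cmult_integral in Hw' as [H|H]; auto.
    exfalso. apply Ceq_minus in H. apply Hinj in H; lia. }
  destruct (Nat.eq_dec j n).
  - subst. pose proof (Hs 0%nat) as H0. simpl in H0.
    rewrite (csum_ext _ (fun _ => 0)) in H0.
    + assert (csum (fun _ : nat => 0) n = 0) by (clear; induction n; simpl; auto; rewrite IHn; ring).
      rewrite H in H0. change (@one C_Ring) with (RtoC 1) in H0. rewrite <- H0. ring.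
    + intros k Hk. rewrite Hlow; auto. ring.
  - apply Hlow. lia.
Qed.

Fixpoint epow (e : ex) (n : nat) : ex := match n with O => ECst 1 | S n => EMul e (epow e n) end.
Fixpoint esum (f : nat -> ex) (n : nat) : ex := match n with O => ECst 0 | S n => EAdd (esum f n) (f n) end.
Definition epsE := EEps (ECst 1).
Definition XE := EAdd (ECst 1) (EEps EVar).
Definition sE (om : C) := EMul (ECst om) XE.
Definition TE i := esum (fun l => epow XE l) i.
Definition RE M := esum TE M.
Definition linE (om : C) (k : nat) := EAdd (sE om) (EMul (ECst (RtoC (- INR k))) epsE).
Fixpoint PE om k := match k with O => ECst 1 | S k => EMul (PE om k) (linE om k) end.
Fixpoint UE om k := match k with O => ECst 0
  | S k => EAdd (EMul (UE om k) (linE om k)) (EMul (ECst (RtoC (- INR k))) (epow (sE om) k)) end.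
Definition Q1E M (a : nat -> C) om := EAdd (UE om M) (esum (fun k => match k with O => ECst 0
   | _ => EMul (ECst (a k)) (EMul (epow epsE (M - k - 1)) (PE om k)) end) M).
Definition PhiE M a om := EMul (ECst (- / RtoC (INR M)))
   (EAdd (EEps (EMul (EMul EVar EVar) (RE M))) (Q1E M a om)).

Lemma strict_epow e n : strict e -> strict (epow e n).
Proof. intros H; induction n; simpl; auto. Qed.
Lemma strict_esum f n : (forall k, strict (f k)) -> strict (esum f n).
Proof. intros H; induction n; simpl; auto. Qed.
Lemma strict_sE om : strict (sE om).
Proof. simpl; auto. Qed.
Lemma strict_PE om k : strict (PE om k).
Proof. induction k; simpl; auto. Qed.
Lemma strict_UE om k : strict (UE om k).
Proof. induction k; simpl; repeat split; auto. apply strict_epow, strict_sE. Qed.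
Lemma strict_Phi M a om : strict (PhiE M a om).
Proof.
  simpl. repeat split; auto. apply strict_UE.
  apply strict_esum. intros [|k]; simpl; auto. repeat split; auto.
  apply strict_epow; simpl; auto. apply strict_PE.
Qed.

Lemma eval_epow e n w z : evalC (epow e n) w z = pow_n (evalC e w z) n.
Proof. induction n; simpl; auto. rewrite IHn. auto. Qed.
Lemma eval_esum f n w z : evalC (esum f n) w z = csum (fun k => evalC (f k) w z) n.
Proof. induction n; simpl; auto. rewrite IHn. auto. Qed.

Fixpoint cff (l : C) (k : nat) : C := match k with O => 1 | S k => cff l k * (l - RtoC (INR k)) end.

Lemma eval_PE (om : C) k (w z : C) : z <> 0 ->
  evalC (PE om k) w z = pow_n z k * cff (om * (1 + z * w) / z) k.
Proof.
  intros Hz. induction k; simpl. rewrite Cmult_1_r. reflexivity.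
  rewrite IHk. change (@mult C_Ring ?a ?b) with (Cmult a b). rewrite RtoC_opp. toC. (toC; field). auto.
Qed.

Lemma eval_PU (om : C) k (w z : C) :
  evalC (PE om k) w z = pow_n (om * (1 + z * w)) k + z * evalC (UE om k) w z.
Proof.
  induction k; simpl. change (@one C_Ring) with (RtoC 1). (toC; ring).
  rewrite IHk, eval_epow. simpl. change (@mult C_Ring ?a ?b) with (Cmult a b). rewrite RtoC_opp. (toC; ring).
Qed.

Lemma geom1 (x : C) n : pow_n (1 + x) n = 1 + x * csum (fun i => pow_n (1 + x) i) n.
Proof.
  induction n; simpl. change (@one C_Ring) with (RtoC 1). (toC; ring).
  change (@mult C_Ring ?a ?b) with (Cmult a b). rewrite IHn. (toC; ring).
Qed.

Lemma geom2 (x : C) n : csum (fun i => pow_n (1 + x) i) n =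
  RtoC (INR n) + x * csum (fun i => csum (fun l => pow_n (1 + x) l) i) n.
Proof.
  induction n. simpl. (toC; ring). cbn [csum].
  rewrite geom1, IHn, S_INR, RtoC_plus. (toC; ring).
Qed.

Lemma pow_n_mult (a b : C) n : pow_n (a * b) n = pow_n a n * pow_n b n.
Proof. induction n; simpl. change (@one C_Ring) with (RtoC 1). (toC; ring). rewrite IHn. change (@mult C_Ring ?x ?y) with (Cmult x y). (toC; ring). Qed.

Lemma pow_n_nz (z : C) n : z <> 0 -> pow_n z n <> RtoC 0.
Proof.
  intros Hz. induction n; simpl. change (@one C_Ring) with (RtoC 1). apply C1_nz.
  change (@mult C_Ring ?x ?y) with (Cmult x y). apply Cmult_neq_0; auto.
Qed.

Lemma pow_n_inv (z : C) n : z <> 0 -> pow_n (/ z) n = / pow_n z n.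
Proof.
  intros Hz. induction n; simpl. change (@one C_Ring) with (RtoC 1). (toC; field).
  change (@mult C_Ring ?x ?y) with (Cmult x y). rewrite IHn. (toC; field). split; auto. apply pow_n_nz; auto.
Qed.

Lemma key_identity M (a : nat -> C) (om w z : C) : (1 <= M)%nat -> pow_n om M = RtoC 1 ->
  w = evalC (PhiE M a om) w z ->
  evalC (PE om M) w z + csum (fun k => match k with O => 0
      | _ => a k * pow_n z (M - k) * evalC (PE om k) w z end) M = 1.
Proof.
  intros HM Hom Hfix.
  assert (HMnz : RtoC (INR M) <> 0).
  { intros H. injection H as H. apply (not_0_INR M); [lia|auto]. }
  unfold PhiE, Q1E, RE in Hfix. simpl in Hfix. rewrite !eval_esum in Hfix.
  set (Rv := csum (fun k => evalC (TE k) w z) M) in Hfix.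
  set (Sg := csum (fun k => evalC match k with O => ECst 0
     | S _ => EMul (ECst (a k)) (EMul (epow epsE (M - k - 1)) (PE om k)) end w z) M) in Hfix.
  assert (HSg : csum (fun k => match k with O => 0
      | _ => a k * pow_n z (M - k) * evalC (PE om k) w z end) M = z * Sg).
  { unfold Sg. rewrite csum_mult_l. apply csum_ext. intros [|k] Hk; simpl. (toC; ring).
    rewrite eval_epow. simpl.
    replace (M - S k)%nat with (S (M - S k - 1)) by lia. simpl.
    rewrite Cmult_1_r, ?Nat.sub_0_r. change (@mult C_Ring ?x ?y) with (Cmult x y). (toC; ring). }
  assert (HRv : Rv = csum (fun i => csum (fun l => pow_n (1 + z * w) l) i) M).
  { unfold Rv. apply csum_ext. intros k _. unfold TE. rewrite eval_esum. apply csum_ext.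
    intros l _. rewrite eval_epow. reflexivity. }
  rewrite HSg, eval_PU, pow_n_mult, Hom, geom1, geom2, <- HRv.
  assert (E : RtoC (INR M) * w = - (z * (w * w * Rv) + (evalC (UE om M) w z + Sg))).
  { rewrite Hfix at 1. (toC; field). auto. }
  transitivity (1 + z * (RtoC (INR M) * w + z * (w * w * Rv) + (evalC (UE om M) w z + Sg))).
  (toC; ring). rewrite E. (toC; ring).
Qed.

Lemma char_identity M (a : nat -> C) (om w z : C) : (1 <= M)%nat -> pow_n om M = RtoC 1 -> z <> 0 ->
  w = evalC (PhiE M a om) w z ->
  let l := om * (1 + z * w) / z in
  cff l M + csum (fun k => match k with O => 0 | _ => a k * cff l k end) M = pow_n (/ z) M.
Proof.
  intros HM Hom Hz Hfix l.
  pose proof (key_identity M a om w z HM Hom Hfix) as K.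
  rewrite eval_PE in K by auto.
  rewrite (csum_ext _ (fun k => pow_n z M * match k with O => 0 | _ => a k * cff l k end)) in K.
  2:{ intros [|k] Hk. (toC; ring). rewrite eval_PE by auto. fold l.
      replace (pow_n z M) with (pow_n z (M - S k) * pow_n z (S k)).
      (toC; ring). rewrite <- (pow_n_plus (K:=C_Ring)). f_equal. lia. }
  rewrite <- csum_mult_l in K. fold l in K.
  assert (Hzn : pow_n z M <> RtoC 0) by (apply pow_n_nz; auto).
  rewrite pow_n_inv by auto.
  set (L := cff l M + csum (fun k => match k with O => 0 | S _ => a k * cff l k end) M).
  replace L with (/ pow_n z M * (pow_n z M * L)) by (toC; field; auto).
  unfold L. rewrite Cmult_plus_distr_l, K. (toC; ring).
Qed.

Lemma tr1 (L : C -> C) (z l : C) : @is_derive C_AbsRing C_NormedModule L z l -> @is_derive C_AbsRing (AbsRing_NormedModule C_AbsRing) L z l.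
Proof. intros [_ H]. split. apply is_linear_scal_l. intros x Hx eps. exact (H x Hx eps). Qed.
Lemma tr2 (L : C -> C) (z l : C) : @is_derive C_AbsRing (AbsRing_NormedModule C_AbsRing) L z l -> @is_derive C_AbsRing C_NormedModule L z l.
Proof. intros [_ H]. split. apply is_linear_scal_l. intros x Hx eps. exact (H x Hx eps). Qed.

Lemma is_derive_val (f : C -> C) z l l' : cderiv f z l -> l = l' -> cderiv f z l'.
Proof. intros H ->; auto. Qed.

Lemma deriv_cexp_lin (U : C -> Prop) (L : C -> C) (z mu c : C) :
  log_branch U L -> U z ->
  cderiv (fun t => c * cexp (mu * L t)) z (c * mu * cexp ((mu - 1) * L z)).
Proof.
  intros HL Hz. destruct (HL z Hz) as [HLz HdL].
  assert (Hz0 : z <> 0) by (rewrite <- HLz; apply cexp_ne0).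
  assert (H1 : cderiv (fun t => mu * L t) z (mu * / z)).
  { unfold cderiv in *. pose proof (is_derive_scal_l (K:=C_AbsRing) (V:=C_NormedModule) L z (/ z) mu (tr1 _ _ _ HdL)) as H.
    replace (mu * / z) with (scal (/ z) mu) by (change (scal (/z) mu) with (/z * mu); toC; ring).
    eapply is_derive_ext; [|exact H].
    intros t. simpl. change (scal (L t) mu) with (L t * mu). toC; ring. }
  assert (H2 : cderiv (fun t => cexp (mu * L t)) z (scal (mu * / z) (cexp (mu * L z)))).
  { unfold cderiv in *. apply (is_derive_comp cexp (fun t => mu * L t) z). apply cexp_deriv. exact (tr1 _ _ _ H1). }
  unfold cderiv in *.
  pose proof (is_derive_scal_l (K:=C_AbsRing) (V:=C_NormedModule) _ z _ c (tr1 _ _ _ H2)) as H3.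
  assert (H4 : is_derive (fun t => c * cexp (mu * L t)) z (scal (scal (mu * / z) (cexp (mu * L z))) c)).
  { eapply is_derive_ext; [|exact H3].
    intros t. simpl. change (scal (cexp (mu * L t)) c) with (cexp (mu * L t) * c). toC; ring. }
  eapply is_derive_val. exact H4.
  - assert (E : cexp ((mu - 1) * L z) = cexp (mu * L z) * / z).
    { replace ((mu - 1) * L z) with (mu * L z + - L z) by (toC; ring).
      rewrite cexp_add, cexp_neg, HLz. auto. }
    simpl. change (scal (scal (mu * / z) (cexp (mu * L z))) c) with (mu * / z * cexp (mu * L z) * c).
    rewrite E. toC; ring.
Qed.

Lemma is_derive_csum (n : nat) (f : nat -> C -> C) (df : nat -> C) (z : C) :
  (forall j, (j < n)%nat -> cderiv (f j) z (df j)) ->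
  cderiv (fun t => csum (fun j => f j t) n) z (csum df n).
Proof.
  induction n; intros H; simpl.
  - apply (is_derive_const (K:=C_AbsRing) (V:=C_NormedModule) (RtoC 0) z).
  - unfold cderiv. apply (is_derive_plus (K:=C_AbsRing) (V:=C_NormedModule)).
    apply IHn. intros; apply H; lia. apply H; lia.
Qed.

Lemma cexp_shift (U : C -> Prop) (L : C -> C) t mu : log_branch U L -> U t ->
  cexp ((mu - 1) * L t) = cexp (mu * L t) * / t.
Proof.
  intros HL Ht. destruct (HL t Ht) as [HLt _].
  replace ((mu - 1) * L t) with (mu * L t + - L t) by (toC; ring).
  rewrite cexp_add, cexp_neg, HLt. auto.
Qed.

Lemma zpow_cexp (U : C -> Prop) (L : C -> C) z lam k : log_branch U L -> U z ->
  pow_n z k * cexp ((lam - RtoC (INR k)) * L z) = cexp (lam * L z).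
Proof.
  intros HL Hz. destruct (HL z Hz) as [HLz _].
  assert (E : pow_n z k = cexp (RtoC (INR k) * L z)) by (rewrite <- cexp_pow, HLz; reflexivity).
  rewrite E, <- cexp_add. f_equal. toC; ring.
Qed.

Definition CSeries (u : nat -> C) : C := (Series (fun n => Re (u n)), Series (fun n => Im (u n))).

Lemma CSeries_unique u l : is_series u l -> CSeries u = l.
Proof.
  intros H. apply Cser_split in H as [H1 H2]. unfold CSeries.
  rewrite (is_series_unique _ _ H1), (is_series_unique _ _ H2). destruct l; reflexivity.
Qed.

Definition Wf e (z : C) := CSeries (fun k => scal (pow_n z k) (hseq e k)).

Lemma bnd_mono a rho Rb z : (0 <= rho)%R -> bnd rho a Rb -> (Cmod z <= rho)%R -> bnd (Cmod z) a Rb.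
Proof.
  intros Hrho [A B] Hz.
  assert (Hle : forall n, (0 <= nterm (Cmod z) a n <= nterm rho a n)%R).
  { intros n. split. apply nterm_pos, Cmod_ge_0. unfold nterm.
    apply Rmult_le_compat_l. apply Cmod_ge_0. apply pow_incr. split; auto. apply Cmod_ge_0. }
  split. refine (@ex_series_le R_AbsRing R_CompleteNormedModule _ _ _ A).
  intros n. rewrite R_abs_norm, Rabs_pos_eq; apply Hle.
  eapply Rle_trans; [|exact B]. apply Series_le; auto.
Qed.

Lemma fix_eval2 e rho Rb : strict e -> (0 <= rho)%R -> bnd rho (hseq e) Rb ->
  forall z, (Cmod z <= rho)%R ->
  is_pseries (hseq e) z (Wf e z) /\ Wf e z = evalC e (Wf e z) z /\ (Cmod (Wf e z) <= Rb)%R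
  /\ bnd (Cmod z) (hseq e) Rb.
Proof.
  intros Hs Hrho Hb z Hz.
  destruct (fix_eval e rho Rb Hs Hrho Hb z Hz) as [W [HW [HF HB]]].
  assert (E : Wf e z = W) by (apply CSeries_unique; exact HW).
  rewrite E. split; [|split; [|split]]; auto. apply (bnd_mono _ rho); auto.
Qed.

Definition Phij M a j := PhiE M a (omega M j).
Definition hh M a j k := evalS (sE (omega M j)) (hseq (Phij M a j)) k.
Definition ss M a j z := evalC (sE (omega M j)) (Wf (Phij M a j) z) z.

Lemma hh0 M a j : hh M a j 0 = omega M j.
Proof. unfold hh. simpl. unfold conv. rewrite sum_O. simpl. toC; ring. Qed.

Definition GoodJ M a d j r := forall z, (Cmod z < r)%R ->
  is_pseries (hh M a j) z (ss M a j z) /\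
  Wf (Phij M a j) z = evalC (Phij M a j) (Wf (Phij M a j) z) z /\
  (Cmod z * Cmod (Wf (Phij M a j) z) < d / 2)%R.

Lemma per_j M a j d : (0 < d)%R -> exists r, (0 < r)%R /\ GoodJ M a d j r.
Proof.
  intros Hd.
  destruct (fixpoint (Phij M a j) (strict_Phi _ _ _)) as [rho [Rb [Hrho [HRb Hb]]]].
  set (r := Rmin rho (d / (2 * (Rb + 1)))).
  assert (Hr : (0 < r)%R) by (apply Rmin_pos; auto; apply Rdiv_lt_0_compat; lra).
  exists r. split; auto. intros z Hz.
  assert (Hzr : (Cmod z <= rho)%R) by (pose proof (Rmin_l rho (d / (2 * (Rb + 1)))); fold r in H; lra).
  destruct (fix_eval2 _ rho Rb (strict_Phi _ _ _) (Rlt_le _ _ Hrho) Hb z Hzr) as [HP [HF [HB Hbz]]].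
  split; [|split; auto].
  - unfold hh, ss. apply (eval_pseries _ _ _ _ Rb Hbz HP).
  - assert (Hr2 : (r <= d / (2 * (Rb + 1)))%R) by apply Rmin_r.
    assert (H1 : (Cmod z * Cmod (Wf (Phij M a j) z) <= r * Rb)%R).
    { apply Rmult_le_compat; auto using Cmod_ge_0. lra. }
    assert (H2 : (r * Rb <= d / (2 * (Rb + 1)) * Rb)%R) by (apply Rmult_le_compat_r; lra).
    assert (H3 : (d / (2 * (Rb + 1)) * Rb < d / 2)%R).
    { unfold Rdiv. apply (Rmult_lt_reg_r (2 * (Rb + 1))). lra.
      replace (d * / (2 * (Rb + 1)) * Rb * (2 * (Rb + 1)))%R with (d * Rb)%R by (field; lra).
      replace (d * / 2 * (2 * (Rb + 1)))%R with (d * (Rb + 1))%R by (field; lra). nra. }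
    lra.
Qed.

Theorem theorem6 (M : nat) (a : nat -> C) (HM : (2 <= M)%nat) :
  exists (h : nat -> nat -> C) (s : nat -> C -> C) (r : R),
    (0 < r)%R /\
    (forall j, (j < M)%nat -> pow_n (h j 0%nat) M = RtoC 1) /\
    (forall i j, (i < M)%nat -> (j < M)%nat -> h i 0%nat = h j 0%nat -> i = j) /\
    (forall j (eps : C), (j < M)%nat -> (Cmod eps < r)%R ->
        @is_pseries C_AbsRing C_NormedModule (h j) eps (s j eps)) /\
    (forall (eps : C) (U : C -> Prop) (L : C -> C),
        eps <> 0 -> (Cmod eps < r)%R ->
        open U -> log_branch U L ->
        let psi := fun j z =>
          cexp (s j eps / eps * L z) in
        (forall j, (j < M)%nat ->
           exists D : nat -> C -> C,
             derivs_on U M (psi j) D /\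
             (forall z, U z -> euler_cauchy M a (/ eps) D z = RtoC 0)) /\
        ((exists z0, U z0) ->
         forall c : nat -> C,
           (forall z, U z -> sum_n (fun j => c j * psi j z) (M - 1) = RtoC 0) ->
           forall j, (j < M)%nat -> c j = RtoC 0)).
Proof.
  assert (HM1 : (1 <= M)%nat) by lia.
  destruct (omega_sep M) as [d [Hd Hsep]]. lia.
  destruct (finite_min M (GoodJ M a d)) as [r [Hr Hgood]].
  { intros j r r' Hr' Hg z Hz. apply Hg. lra. }
  { intros j Hj. apply per_j; auto. }
  exists (hh M a), (ss M a), r.
  split; [auto|].
  split; [intros j Hj; rewrite hh0; apply omega_pow; lia|].
  split; [intros i j Hi Hj H; rewrite !hh0 in H; apply (omega_inj M); auto|].
  split; [intros j eps Hj He; apply (Hgood j Hj eps He)|].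
  intros eps U L Heps Hepsr HU HL psi.
  set (lam := fun j => ss M a j eps / eps).
  assert (Hchar : forall j, (j < M)%nat ->
    cff (lam j) M + csum (fun k => match k with O => 0 | _ => a k * cff (lam j) k end) M = pow_n (/ eps) M).
  { intros j Hj. destruct (Hgood j Hj eps Hepsr) as [_ [Hfix _]].
    apply (char_identity M a (omega M j) _ eps HM1 (omega_pow M j ltac:(lia)) Heps Hfix). }
  split.
  - intros j Hj. exists (fun k t => cff (lam j) k * cexp ((lam j - RtoC (INR k)) * L t)).
    split. split.
    + intros z Hz. unfold psi. simpl cff. rewrite Cmult_1_l. f_equal.
      fold (lam j). simpl INR. toC; ring.
    + intros k z Hk Hz. eapply is_derive_val.
      apply (deriv_cexp_lin U L z (lam j - RtoC (INR k)) (cff (lam j) k) HL Hz).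
      simpl cff.
      replace (lam j - RtoC (INR k) - 1) with (lam j - RtoC (INR (S k))) by (rewrite S_INR, RtoC_plus; toC; ring).
      toC; ring.
    + intros z Hz. unfold euler_cauchy.
      set (Psi := cexp (lam j * L z)).
      assert (HD : forall k, pow_n z k * (cff (lam j) k * cexp ((lam j - RtoC (INR k)) * L z)) = cff (lam j) k * Psi).
      { intros k. unfold Psi. rewrite <- (zpow_cexp U L z (lam j) k HL Hz). toC; ring. }
      cbv beta. rewrite HD. rewrite csum_sum_n_m by auto.
      rewrite (csum_ext _ (fun k => Psi * match k with O => 0 | S _ => a k * cff (lam j) k end)).
      2:{ intros [|k] _. toC; ring. rewrite <- (Cmult_assoc (a (S k))), HD. toC; ring. }
      rewrite <- csum_mult_l.
      assert (H0 : cff (lam j) 0 * cexp ((lam j - RtoC (INR 0)) * L z) = Psi).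
      { simpl cff. rewrite Cmult_1_l. unfold Psi. f_equal. simpl INR. toC; ring. }
      rewrite H0, <- (Hchar j Hj). toC; ring.
  - intros [z0 Hz0] c Hc j Hj.
    set (g := fun m t => csum (fun i => (c i * pow_n (lam i) m) * cexp (lam i * L t)) M).
    assert (Hg : forall m t, U t -> g m t = 0).
    { induction m; intros t Ht.
      - unfold g. rewrite <- (Hc t Ht). rewrite csum_sum_n. replace (S (M - 1)) with M by lia.
        apply csum_ext. intros i _. unfold psi. simpl pow_n. change (@one C_Ring) with (RtoC 1). unfold lam. toC; ring.
      - destruct (HL t Ht) as [HLt _].
        assert (Ht0 : t <> 0) by (rewrite <- HLt; apply cexp_ne0).
        assert (D1 : cderiv (g m) t (csum (fun i => (c i * pow_n (lam i) m) * lam i * cexp ((lam i - 1) * L t)) M)).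
        { unfold g. apply is_derive_csum. intros i _. apply (deriv_cexp_lin U L t); auto. }
        assert (D0 : cderiv (g m) t 0).
        { unfold cderiv. apply (is_derive_ext_loc (K:=C_AbsRing) (V:=C_NormedModule) (fun _ => RtoC 0)).
          - apply locally_C. generalize (HU t Ht). apply filter_imp. intros y Hy. symmetry. apply IHm; auto.
          - apply (is_derive_const (K:=C_AbsRing) (V:=C_NormedModule) (RtoC 0) t). }
        pose proof (is_C_derive_unique _ _ _ D1) as E1. pose proof (is_C_derive_unique _ _ _ D0) as E0.
        rewrite E0 in E1.
        assert (E2 : csum (fun i => (c i * pow_n (lam i) m) * lam i * cexp ((lam i - 1) * L t)) M = / t * g (S m) t).
        { unfold g. rewrite csum_mult_l. apply csum_ext. intros i _.
          rewrite (cexp_shift U L t (lam i) HL Ht). simpl pow_n. change (@mult C_Ring ?x ?y) with (Cmult x y). toC; ring. }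
        rewrite E2 in E1.
        replace (g (S m) t) with (t * (/ t * g (S m) t)) by (toC; field; auto).
        rewrite <- E1. toC; ring. }
    assert (Hinj : forall i k, (i < M)%nat -> (k < M)%nat -> lam i = lam k -> i = k).
    { intros i k Hi Hk Hik. destruct (Nat.eq_dec i k) as [|Hne]; auto. exfalso.
      pose proof (Hsep i k Hi Hk Hne) as Hs.
      destruct (Hgood i Hi eps Hepsr) as [_ [_ Bi]]. destruct (Hgood k Hk eps Hepsr) as [_ [_ Bk]].
      assert (Hss : ss M a i eps = ss M a k eps).
      { unfold lam in Hik. replace (ss M a i eps) with (ss M a i eps / eps * eps) by (toC; field; auto).
        rewrite Hik. toC; field; auto. }
      unfold ss in Hss. simpl in Hss.
      set (Wi := Wf (Phij M a i) eps) in *. set (Wk := Wf (Phij M a k) eps) in *.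
      assert (E : omega M i - omega M k = eps * Wk * omega M k - eps * Wi * omega M i).
      { transitivity (omega M i * (1 + eps * Wi) - omega M k * (1 + eps * Wk) + eps * Wk * omega M k - eps * Wi * omega M i).
        toC; ring. rewrite Hss. toC; ring. }
      rewrite E in Hs.
      assert (T : (Cmod (eps * Wk * omega M k - eps * Wi * omega M i) <= Cmod eps * Cmod Wk + Cmod eps * Cmod Wi)%R).
      { unfold Cminus. eapply Rle_trans. apply Cmod_triangle.
        rewrite Cmod_opp, !Cmod_mult, !Cmod_omega. lra. }
      lra. }
    assert (Hv := vander M (fun i => c i * psi i z0) lam Hinj).
    assert (Hz : c j * psi j z0 = 0).
    { apply Hv; auto. intros m. rewrite <- (Hg m z0 Hz0). unfold g. apply csum_ext. intros i _.
      unfold psi. fold (lam i). toC; ring. }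
    apply Cmult_integral in Hz as [Hz|Hz]; auto. exfalso. unfold psi in Hz. apply (cexp_ne0 _ Hz).
Qed.
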